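(* Let $d\ge1$, $\sigma>0$ and $\theta\in\mathbb{R}^d$ with $\|\theta\|_2^2\le\frac{5\sigma^2}{8}$. Let $V=(V_1,\dots,V_d)\sim\mathcal N(0,I_d)$ and define the $d\times d$ matrix $$F_\theta:=\mathbb{E}\left[\int_0^1\frac{VV^\top}{\big(\exp(-u\|\theta\|_2V_1/\sigma)+\exp(u\|\theta\|_2V_1/\sigma)\big)^2}\,du\right].$$ Then for all $j\in[d]$, $$[F_\theta]_{jj}\ge [F_\theta]_{11}\ge \frac{1}{4\big(1+2\|\theta\|_2^2/\sigma^2\big)}.$$ *)

(* Defs.v *)
From Stdlib Require Import Reals Lra List.
Open Scope R_scope.

Definition riemann_int (f : R -> R) (a b l : R) : Prop :=
  exists pr : Riemann_integrable f a b, RiemannInt pr = l.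

Definition improper_int (f : R -> R) (l : R) : Prop :=
  exists pr : forall a b, Riemann_integrable f a b,
    forall eps, eps > 0 -> exists A, forall a b, a <= - A -> A <= b ->
      Rabs (RiemannInt (pr a b) - l) < eps.

Definition gauss_density (x : R) : R := exp (- (x ^ 2) / 2) / sqrt (2 * PI).

(* Vectors of R^d are functions nat -> R; coordinate i (0-based) is v i. *)
Definition vcons (x : R) (v : nat -> R) : nat -> R :=
  fun i => match i with O => x | S i' => v i' end.

(* gauss_exp d h l : E[h(V)] = l, for V ~ N(0, I_d), computed as the iterated
   integral  int phi(x_1) int phi(x_2) ... h(x_1,...,x_d) dx_d ... dx_1. *)
Fixpoint gauss_exp (d : nat) (h : (nat -> R) -> R) (l : R) : Prop :=
  match d with
  | O => l = h (fun _ => 0)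
  | S d' => exists g : R -> R,
      (forall x, gauss_exp d' (fun v => h (vcons x v)) (g x)) /\
      improper_int (fun x => g x * gauss_density x) l
  end.

Definition sqnorm (d : nat) (theta : nat -> R) : R :=
  fold_right Rplus 0 (map (fun i => theta i ^ 2) (seq 0 d)).

(* Fentry d sigma theta j k l : the (j,k) entry (0-based indices) of
   F_theta = E[ int_0^1 V V^T / (exp(-u|theta| V_1/sigma) + exp(u|theta| V_1/sigma))^2 du ]
   equals l. *)
Definition Fentry (d : nat) (sigma : R) (theta : nat -> R) (j k : nat) (l : R)
  : Prop :=
  let t := sqrt (sqnorm d theta) in
  exists h : (nat -> R) -> R,
    (forall v, riemann_int
       (fun u => v j * v k /
          (exp (- (u * t * v 0%nat / sigma)) + exp (u * t * v 0%nat / sigma)) ^ 2)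
       0 1 (h v)) /\
    gauss_exp d h l.

(* Main.v *)
Require Import Defs.
From Stdlib Require Import Reals Lra Lia List.
Open Scope R_scope.

Module Bridge.
From HB Require Import structures.
From mathcomp Require Import all_boot all_order all_algebra.
From mathcomp Require Import all_classical all_reals all_analysis.
From mathcomp Require Import Rstruct Rstruct_topology.
Import Order.TTheory GRing.Theory Num.Theory.
Import numFieldNormedType.Exports.
Local Open Scope classical_set_scope.
Local Open Scope ring_scope.
Lemma dpl_is_derive (F : R -> R) x l : derivable_pt_lim F x l ->
  @derivable _ R^o R^o F x 1 /\ @derive1 _ R^o F x = l.
Proof.
move=> H.
have C : @derivable _ R^o R^o F x 1 /\ @derive _ R^o R^o F x 1 = l.
  rewrite /derivable /derive.
  match goal with |- cvg (?g @ _) /\ _ => have Cg : g @ 0^' --> l end.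
    apply/cvgrPdist_lt => e /RltP e0.
    have [d Hd] := H e e0.
    exists (pos d); first exact/RltP/cond_pos.
    move=> h /= hd h0.
    rewrite /ball /= sub0r normrN -RabsE in hd.
    have hd' : Rlt (Rabs h) d by apply/RltP.
    have h0' : h <> 0%coqR by move=> E; rewrite E eqxx in h0.
    have := Hd h h0' hd'.
    move=> /RltP; rewrite RabsE distrC.
    have E : (h%:A : R^o) = h by rewrite /GRing.scale /= mulr1.
    rewrite E RdivE RminusE RplusE mulrC (addrC x).
    by [].
  split; first by apply/cvg_ex; exists l.
  exact: cvg_lim.
by rewrite derive1E.
Qed.
Lemma bridge_FTC (f F : R -> R) (a b : R) : Rlt a b ->
  (forall x, continuity_pt f x) -> (forall x, derivable_pt_lim F x (f x)) ->
  (\int[lebesgue_measure]_(x in `[a, b]) (f x)%:E)%E = ((F b - F a)%:E)%E.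
Proof.
move=> ab cf dF.
have cF : forall x, continuity_pt F x.
  by move=> x; apply: derivable_continuous_pt; exists (f x); apply: dF.
rewrite EFinB.
apply: (@continuous_FTC2 _ f (F : R -> R^o)).
- exact/RltP.
- apply: continuous_subspaceT => x; exact/continuity_ptE.
- split.
  + move=> x _; have := (@dpl_is_derive F x (f x) (dF x)).1; by [].
  + apply: cvg_at_right_filter; exact/continuity_ptE.
  + apply: cvg_at_left_filter; exact/continuity_ptE.
- move=> x _; have := (@dpl_is_derive F x (f x) (dF x)).2; by [].
Qed.
Lemma pi_PI : pi = PI.
Proof.
have H := @bridge_FTC (fun x : R => (oneDsqr x)^-1) Ratan.atan 0 1 Rlt_0_1.
have := integral0_oneDsqr (ler01 : (0:R) <= 1).
rewrite /Rintegral H.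
- rewrite atan1 Ratan.atan_1 Ratan.atan_0 /= subr0 => E.
  have h4 : IZR 4 = 4%:R by rewrite IZRposE INRE.
  move: E; rewrite RdivE h4 => /mulIf -> //.
- move=> x; apply/continuity_ptE; exact: continuous_oneDsqrV.
- move=> x; have := Ratan.derivable_pt_lim_atan x.
  by rewrite RinvE RplusE RpowE /oneDsqr.
Qed.
Lemma gauss_bridge (G : R -> R) : G 0%coqR = 0%coqR ->
  (forall x, derivable_pt_lim G x (Rtrigo_def.exp (- (x ^ 2))%coqR)) ->
  forall eps, Rlt 0 eps -> exists A, forall x, Rle A x ->
    (Rabs (G x - R_sqrt.sqrt PI / 2) < eps)%coqR.
Proof.
move=> G0 dG.
have GE : forall x : R, 0 < x -> gauss_integral_proof.integral0_gauss x = G x.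
  move=> x x0.
  rewrite /gauss_integral_proof.integral0_gauss /Rintegral.
  rewrite (@bridge_FTC gauss_fun G 0 x) /=.
  - by rewrite G0 subr0.
  - exact/RltP.
  - move=> y; apply/continuity_ptE; exact: continuous_gauss_fun.
  - move=> y; have := dG y; by rewrite /gauss_fun -RexpE RoppE RpowE.
have cvg_Ig : @gauss_integral_proof.integral0_gauss R x @[x --> +oo] --> Num.sqrt pi / 2.
  have : Num.sqrt (@gauss_integral_proof.integral0_gauss R x ^+ 2) @[x --> +oo]
      --> Num.sqrt (pi / 4).
    apply: continuous_cvg => //;
      [exact: sqrt_continuous|exact: gauss_integral_proof.cvg_integral0_gauss_sqr].
  rewrite sqrtrM ?pi_ge0// sqrtrV// (_ : 4 = 2 ^+ 2); last first.
    by rewrite expr2 -natrM.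
  rewrite sqrtr_sqr ger0_norm//.
  rewrite (_ : (fun _ => Num.sqrt _) = gauss_integral_proof.integral0_gauss)//.
  apply/funext => r; rewrite sqrtr_sqr// ger0_norm//.
  exact: gauss_integral_proof.integral0_gauss_ge0.
have cvgG : G x @[x --> +oo] --> Num.sqrt pi / 2.
  apply: cvg_trans cvg_Ig; apply: near_eq_cvg.
  by near=> x; rewrite GE.
move=> eps /RltP e0.
have [M [Mr HM]] := (@cvgrPdist_lt _ R^o _ _ _ G (Num.sqrt pi / 2)).1 cvgG eps e0.
exists (Rmax R1 (Rplus M R1)) => x Hx.
apply/RltP.
rewrite RabsE distrC RsqrtE -pi_PI (_ : IZR 2 = 2%:R); last by rewrite IZRposE INRE.
apply: HM; apply/RltP.
have := Rmax_r R1 (Rplus M R1); lra.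
Unshelve. all: by end_near. Qed.
End Bridge.

From Stdlib Require Import Reals Lra Lia List Classical FunctionalExtensionality.
From Coquelicot Require Import Coquelicot.
Open Scope R_scope.
Global Set Bullet Behavior "Strict Subproofs".
Definition gauss_bridge := Bridge.gauss_bridge.

Definition lim_p (P : R -> R) l := forall eps, 0 < eps -> exists A, forall x, A <= x -> Rabs (P x - l) < eps.
Definition lim_m (P : R -> R) l := forall eps, 0 < eps -> exists A, forall x, x <= A -> Rabs (P x - l) < eps.

Lemma riemann_of_is_RInt f a b l : is_RInt f a b l -> riemann_int f a b l.
Proof.
intros H. exists (ex_RInt_Reals_0 _ _ _ (ex_intro _ l H)).
rewrite <- RInt_Reals. now apply is_RInt_unique.
Qed.

Lemma improper_of_RInt f l : (forall a b, ex_RInt f a b) ->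
  (forall eps, 0 < eps -> exists A, forall a b, a <= - A -> A <= b -> Rabs (RInt f a b - l) < eps) ->
  improper_int f l.
Proof.
intros Hex H. exists (fun a b => ex_RInt_Reals_0 _ _ _ (Hex a b)).
intros eps Heps. destruct (H eps Heps) as [A HA]. exists A. intros a b Ha Hb.
rewrite <- RInt_Reals. now apply HA.
Qed.

Lemma RInt_of_improper f l : improper_int f l ->
  (forall a b, ex_RInt f a b) /\
  (forall eps, 0 < eps -> exists A, forall a b, a <= - A -> A <= b -> Rabs (RInt f a b - l) < eps).
Proof.
intros [pr H]. split.
- intros a b; apply ex_RInt_Reals_1, pr.
- intros eps Heps. destruct (H eps Heps) as [A HA]. exists A. intros a b Ha Hb.
  rewrite (RInt_Reals _ _ _ (pr a b)). now apply HA.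
Qed.

Lemma ex_RInt_cont (f : R -> R) : (forall x, continuous f x) -> forall a b, ex_RInt f a b.
Proof. intros H a b. apply (@ex_RInt_continuous R_CompleteNormedModule). intros; apply H. Qed.

Lemma FTC (F f : R -> R) a b : (forall x, is_derive F x (f x)) ->
  (forall x, continuous f x) -> is_RInt (V := R_NormedModule) f a b (F b - F a).
Proof.
intros HF Hf. apply (is_RInt_derive F f a b); intros; auto.
Qed.

Lemma RInt_FTC (F f : R -> R) a b : (forall x, is_derive F x (f x)) ->
  (forall x, continuous f x) -> RInt f a b = F b - F a.
Proof. intros; apply is_RInt_unique, FTC; auto. Qed.

Lemma improper_antideriv f F lp lm : (forall x, continuous f x) ->
  (forall x, is_derive F x (f x)) -> lim_p F lp -> lim_m F lm ->
  improper_int f (lp - lm).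
Proof.
intros Hc HF Hp Hm. apply improper_of_RInt; [apply ex_RInt_cont; auto|].
intros eps Heps.
destruct (Hp (eps/2)) as [A1 H1]; [lra|].
destruct (Hm (eps/2)) as [A2 H2]; [lra|].
exists (Rmax A1 (- A2)). intros a b Ha Hb.
rewrite (RInt_FTC F f); auto.
assert (A1 <= b) by (pose proof (Rmax_l A1 (-A2)); lra).
assert (a <= A2) by (pose proof (Rmax_r A1 (-A2)); lra).
specialize (H1 b H). specialize (H2 a H0).
replace (F b - F a - (lp - lm)) with ((F b - lp) - (F a - lm)) by ring.
eapply Rle_lt_trans; [apply Rabs_triang|]. rewrite Rabs_Ropp. lra.
Qed.

Lemma improper_ibp f g B l : improper_int g l -> (forall x, continuous f x) ->
  (forall x, continuous g x) ->
  (forall x, is_derive B x (f x - g x)) -> lim_p B 0 -> lim_m B 0 ->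
  improper_int f l.
Proof.
intros Hg Hcf Hcg HB Hp Hm.
destruct (RInt_of_improper _ _ Hg) as [_ Hg'].
apply improper_of_RInt; [apply ex_RInt_cont; auto|].
intros eps Heps.
destruct (Hp (eps/3)) as [A1 H1]; [lra|].
destruct (Hm (eps/3)) as [A2 H2]; [lra|].
destruct (Hg' (eps/3)) as [A3 H3]; [lra|].
exists (Rmax (Rmax A1 (- A2)) A3). intros a b Ha Hb.
assert (E : RInt f a b = RInt g a b + (B b - B a)).
{ rewrite <- (RInt_FTC B (fun x => f x - g x) a b); auto.
  2:{ intros x; apply (continuous_minus f g); auto. }
  assert (E2 : RInt (fun x => f x - g x) a b = RInt f a b - RInt g a b).
  { apply (RInt_minus (V:=R_CompleteNormedModule)); apply ex_RInt_cont; auto. }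
  rewrite E2. assert (K : forall u v : R, u = v + (u - v)) by (intros; ring). apply K. }
pose proof (Rmax_l (Rmax A1 (- A2)) A3). pose proof (Rmax_r (Rmax A1 (- A2)) A3).
pose proof (Rmax_l A1 (-A2)). pose proof (Rmax_r A1 (-A2)).
specialize (H1 b ltac:(lra)). specialize (H2 a ltac:(lra)).
specialize (H3 a b ltac:(lra) ltac:(lra)).
rewrite E. rewrite Rminus_0_r in H1, H2. revert H3.
assert (K : forall r : R, Rabs (r - l) < eps/3 -> Rabs (r + (B b - B a) - l) < eps).
{ intros r Hr.
  replace (r + (B b - B a) - l) with ((r - l) + B b + - B a) by ring.
  eapply Rle_lt_trans; [apply Rabs_triang|]. rewrite Rabs_Ropp.
  pose proof (Rabs_triang (r - l) (B b)). lra. }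
apply K.
Qed.


Lemma RInt_Chasles_R (f : R -> R) a b c : (forall a b, ex_RInt f a b) ->
  RInt f a c = RInt f a b + RInt f b c.
Proof.
intros H. symmetry. apply (RInt_Chasles (V:=R_CompleteNormedModule)); auto.
Qed.

Lemma RInt_mono_dom (f : R -> R) a a0 b0 b : (forall a b, ex_RInt f a b) ->
  (forall x, 0 <= f x) -> a <= a0 -> a0 <= b0 -> b0 <= b ->
  RInt f a0 b0 <= RInt f a b.
Proof.
intros H Hp H1 H2 H3.
rewrite (RInt_Chasles_R f a a0 b H), (RInt_Chasles_R f a0 b0 b H).
assert (0 <= RInt f a a0) by (apply RInt_ge_0; auto).
assert (0 <= RInt f b0 b) by (apply RInt_ge_0; auto).
revert H0 H4. generalize (RInt f a a0) (RInt f b0 b) (RInt f a0 b0). intros; lra.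
Qed.

Lemma improper_le (f g : R -> R) lf lg : improper_int f lf -> improper_int g lg ->
  (forall x, f x <= g x) -> lf <= lg.
Proof.
intros Hf Hg Hfg.
destruct (RInt_of_improper _ _ Hf) as [Ef Hf'].
destruct (RInt_of_improper _ _ Hg) as [Eg Hg'].
destruct (Rle_or_lt lf lg) as [|Hlt]; auto. exfalso.
destruct (Hf' ((lf - lg)/2)) as [A1 H1]; [lra|].
destruct (Hg' ((lf - lg)/2)) as [A2 H2]; [lra|].
set (A := Rmax (Rmax A1 A2) 0).
assert (HA1 : A1 <= A) by (unfold A; pose proof (Rmax_l (Rmax A1 A2) 0); pose proof (Rmax_l A1 A2); lra).
assert (HA2 : A2 <= A) by (unfold A; pose proof (Rmax_l (Rmax A1 A2) 0); pose proof (Rmax_r A1 A2); lra).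
assert (HA0 : 0 <= A) by (unfold A; apply Rmax_r).
specialize (H1 (-A) A ltac:(lra) ltac:(lra)). specialize (H2 (-A) A ltac:(lra) ltac:(lra)).
assert (Hle : RInt f (-A) A <= RInt g (-A) A).
{ apply RInt_le; auto. lra. }
revert H1 H2 Hle. generalize (RInt f (-A) A) (RInt g (-A) A). intros u v H1 H2 Hle.
apply Rabs_def2 in H1. apply Rabs_def2 in H2. lra.
Qed.

Lemma improper_bound (g : R -> R) lg : improper_int g lg -> (forall x, 0 <= g x) ->
  forall a b, a <= b -> RInt g a b <= lg.
Proof.
intros Hg Hp a b Hab.
destruct (RInt_of_improper _ _ Hg) as [Eg Hg'].
destruct (Rle_or_lt (RInt g a b) lg) as [|Hlt]; auto. exfalso.
destruct (Hg' (RInt g a b - lg)) as [A1 H1]; [lra|].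
set (A := Rmax (Rmax A1 (Rabs a)) (Rabs b)).
assert (A1 <= A) by (unfold A; pose proof (Rmax_l (Rmax A1 (Rabs a)) (Rabs b)); pose proof (Rmax_l A1 (Rabs a)); lra).
assert (Rabs a <= A) by (unfold A; pose proof (Rmax_l (Rmax A1 (Rabs a)) (Rabs b)); pose proof (Rmax_r A1 (Rabs a)); lra).
assert (Rabs b <= A) by (unfold A; apply Rmax_r).
assert (-A <= a) by (pose proof (Rle_abs (-a)); rewrite Rabs_Ropp in *; lra).
assert (b <= A) by (pose proof (Rle_abs b); lra).
specialize (H1 (-A) A ltac:(lra) ltac:(lra)).
pose proof (RInt_mono_dom g (-A) a b A Eg Hp ltac:(lra) Hab ltac:(lra)) as HM.
revert H1 HM Hlt. generalize (RInt g (-A) A) (RInt g a b). intros u v H1 HM Hlt.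
apply Rabs_def2 in H1. lra.
Qed.


Lemma improper_exists (f g : R -> R) lg : (forall x, continuous f x) ->
  (forall x, 0 <= f x <= g x) -> improper_int g lg -> exists l, improper_int f l.
Proof.
intros Hc Hfg Hg.
pose proof (ex_RInt_cont f Hc) as Ef.
destruct (RInt_of_improper _ _ Hg) as [Eg _].
assert (Hgp : forall x, 0 <= g x) by (intros x; specialize (Hfg x); lra).
set (E := fun r => exists a b, a <= b /\ r = RInt f a b).
assert (HB : forall a b, a <= b -> RInt f a b <= lg).
{ intros a b Hab. pose proof (improper_bound g lg Hg Hgp a b Hab).
  assert (RInt f a b <= RInt g a b) by (apply RInt_le; auto; intros; apply Hfg).
  revert H H0. generalize (RInt f a b) (RInt g a b). intros; lra. }
destruct (completeness E) as [m [Hub Hlub]].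
{ exists lg. intros r [a [b [Hab ->]]]. auto. }
{ exists (RInt f 0 0). exists 0, 0. split; auto; lra. }
exists m. apply improper_of_RInt; auto.
intros eps Heps.
destruct (classic (exists r, E r /\ m - eps < r)) as [[r [[a0 [b0 [Hab ->]]] Hr]] | Hn].
2:{ exfalso. assert (is_upper_bound E (m - eps)).
    { intros r Er. destruct (Rle_or_lt r (m - eps)); auto. exfalso; apply Hn; eauto. }
    specialize (Hlub _ H). lra. }
exists (Rmax (Rabs a0) (Rabs b0)). intros a b Ha Hb.
pose proof (Rmax_l (Rabs a0) (Rabs b0)). pose proof (Rmax_r (Rabs a0) (Rabs b0)).
pose proof (Rle_abs (-a0)). pose proof (Rle_abs b0). rewrite Rabs_Ropp in H1.
assert (Hm1 : RInt f a0 b0 <= RInt f a b).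
{ apply RInt_mono_dom; auto. intros x; apply Hfg. lra. lra. }
assert (Hm2 : RInt f a b <= m). { apply Hub. exists a, b. split; auto. lra. }
revert Hr Hm1 Hm2. generalize (RInt f a0 b0) (RInt f a b). intros u v Hr Hm1 Hm2.
apply Rabs_def1; lra.
Qed.

Lemma improper_scal (f : R -> R) c l : improper_int f l ->
  improper_int (fun x => c * f x) (c * l).
Proof.
intros Hf. destruct (RInt_of_improper _ _ Hf) as [Ef Hf'].
apply improper_of_RInt.
{ intros a b. apply (ex_RInt_scal (V:=R_NormedModule) f a b c); auto. }
intros eps Heps.
destruct (Hf' (eps / (Rabs c + 1))) as [A HA].
{ apply Rdiv_lt_0_compat; auto. pose proof (Rabs_pos c); lra. }
exists A. intros a b Ha Hb. specialize (HA a b Ha Hb).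
assert (E : RInt (fun x => c * f x) a b = c * RInt f a b).
{ apply (RInt_scal (V:=R_CompleteNormedModule)); auto. }
rewrite E. revert HA. generalize (RInt f a b). intros u HA.
replace (c * u - c * l) with (c * (u - l)) by ring. rewrite Rabs_mult.
pose proof (Rabs_pos c). pose proof (Rabs_pos (u - l)).
apply Rle_lt_trans with (Rabs c * (eps / (Rabs c + 1))).
{ apply Rmult_le_compat_l; lra. }
replace eps with ((Rabs c + 1) * (eps / (Rabs c + 1))) at 2 by (field; lra).
apply Rmult_lt_compat_r; [apply Rdiv_lt_0_compat|]; lra.
Qed.



Lemma improper_ext (f g : R -> R) l : improper_int f l -> (forall x, f x = g x) -> improper_int g l.
Proof. intros H E. replace g with f; auto. apply functional_extensionality; auto. Qed.

Definition gf (t : R) := exp (- (t ^ 2)).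
Definition E0 (x : R) := RInt gf 0 x.

Lemma gf_cont x : continuous gf x.
Proof. apply (ex_derive_continuous (K:=R_AbsRing) (V:=R_NormedModule)). unfold gf. auto_derive. auto. Qed.

Lemma E0_deriv x : is_derive E0 x (gf x).
Proof.
apply (is_derive_RInt (V:=R_NormedModule) gf E0 0 x).
- exists (mkposreal 1 Rlt_0_1). intros y _. apply (RInt_correct (V:=R_CompleteNormedModule)).
  apply ex_RInt_cont, gf_cont.
- apply gf_cont.
Qed.

Lemma E0_0 : E0 0 = 0.
Proof. unfold E0. apply (RInt_point (V:=R_CompleteNormedModule)). Qed.

Lemma E0_odd x : E0 (- x) = - E0 x.
Proof.
set (F := fun x => E0 (- x) + E0 x).
assert (HF : forall y, is_derive F y 0).
{ intros y. unfold F.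
  evar (d : R). replace 0 with d.
  - apply (is_derive_plus (K:=R_AbsRing) (V:=R_NormedModule)).
    + apply (is_derive_comp E0 (fun y => - y)). apply E0_deriv.
      apply (is_derive_opp (K:=R_AbsRing) (V:=R_NormedModule) (fun y => y)). apply is_derive_id.
    + apply E0_deriv.
  - unfold d. unfold gf. simpl. unfold scal, opp, one, mult, plus; simpl. unfold mult; simpl. replace (- y * (- y * 1)) with (y * (y * 1)) by ring. ring. }
assert (C : F x - F 0 = 0).
{ rewrite <- (RInt_FTC F (fun _ => 0) 0 x); auto.
  - rewrite (RInt_const (V:=R_CompleteNormedModule)). unfold scal; simpl. unfold mult; simpl. ring.
  - intros; apply continuous_const. }
unfold F in C. rewrite Ropp_0, E0_0 in C. lra.
Qed.

Lemma E0_lim_p : lim_p E0 (sqrt PI / 2).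
Proof.
intros eps Heps. apply (gauss_bridge E0 E0_0); auto.
intros x. apply is_derive_Reals. apply E0_deriv.
Qed.

Lemma E0_lim_m : lim_m E0 (- (sqrt PI / 2)).
Proof.
intros eps Heps. destruct (E0_lim_p eps Heps) as [A HA].
exists (- A). intros x Hx. specialize (HA (- x) ltac:(lra)).
rewrite E0_odd in HA. replace (E0 x - - (sqrt PI / 2)) with (- (- E0 x - sqrt PI / 2)) by ring.
rewrite Rabs_Ropp; auto.
Qed.

Lemma lim_p_lin P l k : 0 < k -> lim_p P l -> lim_p (fun x => P (k * x)) l.
Proof.
intros Hk H eps He. destruct (H eps He) as [A HA]. exists (A / k). intros x Hx.
apply HA. apply Rmult_le_compat_l with (r := k) in Hx; [|lra].
replace (k * (A / k)) with A in Hx by (field; lra). lra.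
Qed.

Lemma lim_m_lin P l k : 0 < k -> lim_m P l -> lim_m (fun x => P (k * x)) l.
Proof.
intros Hk H eps He. destruct (H eps He) as [A HA]. exists (A / k). intros x Hx.
apply HA. apply Rmult_le_compat_l with (r := k) in Hx; [|lra].
replace (k * (A / k)) with A in Hx by (field; lra). lra.
Qed.

Lemma lim_p_scal P l c : lim_p P l -> lim_p (fun x => P x * c) (l * c).
Proof.
intros H eps He. destruct (H (eps / (Rabs c + 1))) as [A HA].
{ apply Rdiv_lt_0_compat; auto. pose proof (Rabs_pos c); lra. }
exists A. intros x Hx. specialize (HA x Hx).
replace (P x * c - l * c) with ((P x - l) * c) by ring. rewrite Rabs_mult.
pose proof (Rabs_pos c). pose proof (Rabs_pos (P x - l)).
apply Rle_lt_trans with ((eps / (Rabs c + 1)) * Rabs c).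
{ apply Rmult_le_compat_r; lra. }
replace eps with ((eps / (Rabs c + 1)) * (Rabs c + 1)) at 2 by (field; lra).
apply Rmult_lt_compat_l; [apply Rdiv_lt_0_compat|]; lra.
Qed.

Lemma lim_m_scal P l c : lim_m P l -> lim_m (fun x => P x * c) (l * c).
Proof.
intros H eps He. destruct (H (eps / (Rabs c + 1))) as [A HA].
{ apply Rdiv_lt_0_compat; auto. pose proof (Rabs_pos c); lra. }
exists A. intros x Hx. specialize (HA x Hx).
replace (P x * c - l * c) with ((P x - l) * c) by ring. rewrite Rabs_mult.
pose proof (Rabs_pos c). pose proof (Rabs_pos (P x - l)).
apply Rle_lt_trans with ((eps / (Rabs c + 1)) * Rabs c).
{ apply Rmult_le_compat_r; lra. }
replace eps with ((eps / (Rabs c + 1)) * (Rabs c + 1)) at 2 by (field; lra).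
apply Rmult_lt_compat_l; [apply Rdiv_lt_0_compat|]; lra.
Qed.

Lemma gauss_scaled alpha : 0 < alpha ->
  improper_int (fun x => exp (- (alpha * x ^ 2) / 2) / sqrt (2 * PI)) (/ sqrt alpha).
Proof.
intros Ha.
set (k := sqrt (alpha / 2)).
assert (Hk : 0 < k) by (apply sqrt_lt_R0; lra).
assert (Hk2 : k * k = alpha / 2) by (apply sqrt_sqrt; lra).
pose proof PI_RGT_0 as HPI.
assert (Hs : 0 < sqrt (2 * PI)) by (apply sqrt_lt_R0; lra).
set (C := / (k * sqrt (2 * PI))).
assert (HC : k * sqrt (2 * PI) = sqrt alpha * sqrt PI).
{ unfold k. rewrite <- !sqrt_mult_alt; try lra. f_equal. field. }
replace (/ sqrt alpha) with ((sqrt PI / 2) * C - (- (sqrt PI / 2)) * C).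
2:{ unfold C. rewrite HC. field. split; apply Rgt_not_eq, sqrt_lt_R0; lra. }
apply (improper_antideriv _ (fun x => E0 (k * x) * C)).
- intros x. apply (ex_derive_continuous (K:=R_AbsRing) (V:=R_NormedModule)). auto_derive. auto.
- intros x. evar (d : R). replace (exp (- (alpha * x ^ 2) / 2) / sqrt (2 * PI)) with d.
  + apply (is_derive_mult (fun x => E0 (k * x)) (fun _ => C)).
    * apply (is_derive_comp E0 (fun x => k * x)). apply E0_deriv.
      apply (is_derive_scal (fun y => y)). apply is_derive_id.
    * apply is_derive_const.
    * intros; apply Rmult_comm.
  + unfold d, gf, C.
    assert (Ee : exp (- ((k * x) ^ 2)) = exp (- (alpha * x ^ 2) / 2)).
    { f_equal. replace ((k * x) ^ 2) with ((k * k) * x ^ 2) by ring. rewrite Hk2. field. }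
    rewrite Ee. unfold scal, one, mult, plus, zero; simpl. unfold mult; simpl. field. lra.
- apply lim_p_scal. apply lim_p_lin; auto. apply E0_lim_p.
- apply lim_m_scal. apply lim_m_lin; auto. apply E0_lim_m.
Qed.

Lemma sqrt2PI_ge1 : 1 <= sqrt (2 * PI).
Proof.
rewrite <- sqrt_1. apply sqrt_le_1_alt. pose proof PI_RGT_0. pose proof (PI2_1). lra.
Qed.

Lemma phi_pos x : 0 < gauss_density x.
Proof.
unfold gauss_density. apply Rdiv_lt_0_compat. apply exp_pos.
pose proof sqrt2PI_ge1; lra.
Qed.

Lemma phi_cont x : continuous gauss_density x.
Proof. apply (ex_derive_continuous (K:=R_AbsRing) (V:=R_NormedModule)). unfold gauss_density. auto_derive. auto. Qed.

Lemma phi_deriv x : is_derive gauss_density x (- x * gauss_density x).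
Proof.
unfold gauss_density. auto_derive. auto. unfold Rdiv. simpl. field.
pose proof sqrt2PI_ge1; lra.
Qed.

Lemma exp_half_bound x : 1 <= Rabs x ->
  Rabs x * exp (- (x ^ 2) / 2) <= 2 / Rabs x.
Proof.
intros Hx.
assert (E : exp (- (x ^ 2) / 2) = / exp (x ^ 2 / 2)).
{ rewrite <- exp_Ropp. f_equal. field. }
rewrite E. pose proof (exp_ineq1_le (x ^ 2 / 2)).
assert (Hx2 : x ^ 2 = Rabs x * Rabs x).
{ rewrite <- Rabs_mult. simpl. rewrite Rmult_1_r. symmetry. apply Rabs_right.
  apply Rle_ge, Rle_0_sqr. }
rewrite Hx2 in *.
assert (0 < exp (Rabs x * Rabs x / 2)) by apply exp_pos.
apply Rmult_le_reg_r with (exp (Rabs x * Rabs x / 2)); auto.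
rewrite Rmult_assoc, Rinv_l by lra. rewrite Rmult_1_r.
apply Rmult_le_reg_l with (Rabs x); [lra|].
replace (Rabs x * (2 / Rabs x * exp (Rabs x * Rabs x / 2))) with (2 * exp (Rabs x * Rabs x / 2)) by (field; lra).
nra.
Qed.

Lemma phi_decay x : 1 <= Rabs x -> gauss_density x <= 2 / Rabs x /\
  Rabs x * gauss_density x <= 2 / Rabs x.
Proof.
intros Hx. pose proof (exp_half_bound x Hx). pose proof sqrt2PI_ge1.
pose proof (exp_pos (- (x ^ 2) / 2)).
assert (Hph : gauss_density x <= exp (- (x ^ 2) / 2)).
{ unfold gauss_density. unfold Rdiv. rewrite <- (Rmult_1_r (exp _)) at 2.
  apply Rmult_le_compat_l; [lra|]. rewrite <- Rinv_1. apply Rinv_le_contravar; lra. }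
split.
- apply Rle_trans with (Rabs x * exp (- (x ^ 2) / 2)); auto. pose proof (Rle_abs x). nra.
- apply Rle_trans with (Rabs x * exp (- (x ^ 2) / 2)); auto.
  apply Rmult_le_compat_l; [lra|auto].
Qed.

Lemma lim_decay (B : R -> R) K : 0 <= K ->
  (forall x, 1 <= Rabs x -> Rabs (B x) <= K / Rabs x) -> lim_p B 0 /\ lim_m B 0.
Proof.
intros HK H. split.
- intros eps He. exists (K / eps + 1). intros x Hx.
  assert (0 <= K / eps) by (apply Rmult_le_pos; [lra|apply Rlt_le, Rinv_0_lt_compat; lra]).
  assert (Hax : Rabs x = x) by (apply Rabs_right; lra).
  rewrite Rminus_0_r. eapply Rle_lt_trans; [apply H; lra|]. rewrite Hax.
  apply Rmult_lt_reg_r with x; [lra|]. unfold Rdiv. rewrite Rmult_assoc, Rinv_l by lra.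
  assert (Hq : eps * (K / eps + 1) <= eps * x) by (apply Rmult_le_compat_l; lra).
  replace (eps * (K / eps + 1)) with (K + eps) in Hq by (field; lra). lra.
- intros eps He. exists (- (K / eps + 1)). intros x Hx.
  assert (0 <= K / eps) by (apply Rmult_le_pos; [lra|apply Rlt_le, Rinv_0_lt_compat; lra]).
  assert (Hax : Rabs x = - x) by (apply Rabs_left; lra).
  rewrite Rminus_0_r. eapply Rle_lt_trans; [apply H; lra|]. rewrite Hax.
  apply Rmult_lt_reg_r with (- x); [lra|]. unfold Rdiv. rewrite Rmult_assoc, Rinv_l by lra.
  assert (Hq : eps * (K / eps + 1) <= eps * (- x)) by (apply Rmult_le_compat_l; lra).
  replace (eps * (K / eps + 1)) with (K + eps) in Hq by (field; lra). lra.
Qed.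

Lemma gauss_norm : improper_int gauss_density 1.
Proof.
eapply improper_ext. 
- replace 1 with (/ sqrt 1) by (rewrite sqrt_1; apply Rinv_1). apply gauss_scaled; lra.
- intros x. unfold gauss_density. rewrite Rmult_1_l. auto.
Qed.

Lemma gauss_m2 : improper_int (fun x => x * x * gauss_density x) 1.
Proof.
apply (improper_ibp _ gauss_density (fun x => - x * gauss_density x)).
- apply gauss_norm.
- intros x. apply (continuous_mult (K:=R_AbsRing)). apply (continuous_mult (K:=R_AbsRing)).
  apply continuous_id. apply continuous_id. apply phi_cont.
- apply phi_cont.
- intros x. evar (d : R). replace (x * x * gauss_density x - gauss_density x) with d.
  + apply (is_derive_mult (fun x => - x) gauss_density).
    * apply (is_derive_opp (K:=R_AbsRing) (V:=R_NormedModule) (fun y => y)). apply is_derive_id.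
    * apply phi_deriv.
    * intros; apply Rmult_comm.
  + unfold d. unfold plus, mult, opp, one; simpl. unfold mult; simpl. ring.
- apply (lim_decay _ 2); [lra|]. intros x Hx. rewrite <- Ropp_mult_distr_l, Rabs_Ropp, Rabs_mult.
  rewrite (Rabs_right (gauss_density x)) by (apply Rle_ge, Rlt_le, phi_pos). apply phi_decay; auto.
- apply (lim_decay _ 2); [lra|]. intros x Hx. rewrite <- Ropp_mult_distr_l, Rabs_Ropp, Rabs_mult.
  rewrite (Rabs_right (gauss_density x)) by (apply Rle_ge, Rlt_le, phi_pos). apply phi_decay; auto.
Qed.


Lemma gauss_expsq c : improper_int (fun x => exp (- ((c * x) ^ 2)) * gauss_density x)
  (/ sqrt (1 + 2 * c ^ 2)).
Proof.
eapply improper_ext. apply gauss_scaled. pose proof (pow2_ge_0 c). lra.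
intros x. unfold gauss_density. unfold Rdiv. rewrite <- Rmult_assoc, <- exp_plus. f_equal. f_equal. field.
Qed.

Lemma improper_eq_l (f : R -> R) l l' : improper_int f l -> l = l' -> improper_int f l'.
Proof. intros H <-; auto. Qed.

Lemma ge_ext n : forall h h' l, gauss_exp n h l -> (forall v, h v = h' v) -> gauss_exp n h' l.
Proof.
induction n as [|n IH]; intros h h' l H E; simpl in *.
- rewrite H; auto.
- destruct H as [g [Hg Hi]]. exists g. split; auto.
  intros x. apply (IH (fun v => h (vcons x v))); auto.
Qed.

Lemma ge_const n c : gauss_exp n (fun _ => c) c.
Proof.
induction n as [|n IH]; simpl; auto.
exists (fun _ => c). split; auto.
eapply improper_ext. eapply improper_eq_l. apply (improper_scal gauss_density c), gauss_norm. ring.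
intros; auto.
Qed.

Lemma ge_sq n : forall i c, (i < n)%nat -> gauss_exp n (fun v => v i * v i * c) c.
Proof.
induction n as [|n IH]; intros i c Hi; [lia|]. simpl.
destruct i as [|i].
- exists (fun x => x * x * c). split.
  + intros x. apply (ge_ext n (fun _ => x * x * c)); [apply ge_const | intros; reflexivity].
  + eapply improper_ext. eapply improper_eq_l. apply (improper_scal (fun x => x * x * gauss_density x) c), gauss_m2. ring.
    intros x. simpl. ring.
- exists (fun _ => c). split.
  + intros x. apply (ge_ext n (fun v => v i * v i * c)); [apply (IH i c); lia | intros; reflexivity].
  + eapply improper_ext. eapply improper_eq_l. apply (improper_scal gauss_density c), gauss_norm. ring.
    intros; auto.
Qed.

Lemma sqnorm_ge0 d theta : 0 <= sqnorm d theta.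
Proof.
unfold sqnorm. induction (seq 0 d) as [|i l IH]; simpl; [lra|].
pose proof (pow2_ge_0 (theta i)). simpl in *. lra.
Qed.

Lemma top_reduction (d : nat) (sigma : R) (theta : nat -> R) (psi : R -> R) (L1 L2 : R) :
  (1 <= d)%nat ->
  (forall y, is_RInt (V:=R_NormedModule) (fun u => 1 / (exp (- (u * sqrt (sqnorm d theta) * y / sigma))
       + exp (u * sqrt (sqnorm d theta) * y / sigma)) ^ 2) 0 1 (psi y)) ->
  improper_int (fun x => x * x * psi x * gauss_density x) L1 ->
  improper_int (fun x => psi x * gauss_density x) L2 ->
  Fentry d sigma theta 0 0 L1 /\
  (forall j, (1 <= j < d)%nat -> Fentry d sigma theta j j L2).
Proof.
intros Hd Hpsi H1 H2.
assert (Hr : forall v j, riemann_int (fun u => v j * v j / (exp (- (u * sqrt (sqnorm d theta) * v 0%nat / sigma))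
       + exp (u * sqrt (sqnorm d theta) * v 0%nat / sigma)) ^ 2) 0 1 (v j * v j * psi (v 0%nat))).
{ intros v j. apply riemann_of_is_RInt.
  eapply is_RInt_ext; [|apply (is_RInt_scal (V:=R_NormedModule) (fun u => 1 / (exp (- (u * sqrt (sqnorm d theta) * v 0%nat / sigma))
       + exp (u * sqrt (sqnorm d theta) * v 0%nat / sigma)) ^ 2) _ _ (v j * v j)), Hpsi].
  intros u _. unfold scal; simpl; unfold mult; simpl. field.
  pose proof (exp_pos (- (u * sqrt (sqnorm d theta) * v 0%nat / sigma))).
  pose proof (exp_pos (u * sqrt (sqnorm d theta) * v 0%nat / sigma)). lra. }
destruct d as [|d']; [lia|].
split.
- exists (fun v => v 0%nat * v 0%nat * psi (v 0%nat)). split; [intros v; apply Hr|].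
  simpl. exists (fun x => x * x * psi x). split; auto.
  intros x. apply (ge_ext d' (fun _ => x * x * psi x)); [apply ge_const | intros; reflexivity].
- intros j Hj. exists (fun v => v j * v j * psi (v 0%nat)). split; [intros v; apply Hr|].
  simpl. exists psi. split; auto.
  intros x. destruct j as [|j]; [lia|]. apply (ge_ext d' (fun v => v j * v j * psi x)); [apply (ge_sq d' j (psi x)); lia | intros; reflexivity].
Qed.


Lemma mono_deriv (F f : R -> R) a b : (forall x, is_derive F x (f x)) ->
  (forall x, continuous f x) -> a <= b -> (forall x, a <= x <= b -> 0 <= f x) -> F a <= F b.
Proof.
intros HF Hc Hab Hp.
assert (0 <= RInt f a b).
{ apply RInt_ge_0; auto. apply ex_RInt_cont; auto. intros x Hx; apply Hp; lra. }
rewrite (RInt_FTC F f) in H; auto. lra.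
Qed.

Lemma S_nonneg y : 0 <= y -> 0 <= y * (exp y + exp (- y)) - (exp y - exp (- y)).
Proof.
intros Hy.
set (S := fun y => y * (exp y + exp (- y)) - (exp y - exp (- y))).
enough (HS : S 0 <= S y) by (unfold S in HS; rewrite Ropp_0, exp_0 in HS; lra).
apply (mono_deriv S (fun y => y * (exp y - exp (- y)))); auto.
- intros x. unfold S. auto_derive; auto. ring.
- intros x. apply (ex_derive_continuous (K:=R_AbsRing) (V:=R_NormedModule)). auto_derive. auto.
- intros x Hx. apply Rmult_le_pos; [lra|].
  destruct (Req_dec x 0) as [->|Hx0]; [rewrite Ropp_0; lra|].
  pose proof (exp_increasing (- x) x ltac:(lra)). lra.
Qed.

Lemma cosh_bound_pos y : 0 <= y -> exp y + exp (- y) <= 2 * exp (y ^ 2 / 2).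
Proof.
intros Hy.
set (F := fun y => - ((exp y + exp (- y)) * exp (- (y ^ 2) / 2))).
assert (HF : F 0 <= F y).
{ apply (mono_deriv F (fun y => (y * (exp y + exp (- y)) - (exp y - exp (- y))) * exp (- (y ^ 2) / 2))); auto.
  - intros x. unfold F. auto_derive; auto. unfold Rdiv. simpl. field.
  - intros x. apply (ex_derive_continuous (K:=R_AbsRing) (V:=R_NormedModule)). auto_derive. auto.
  - intros x Hx. apply Rmult_le_pos. apply S_nonneg; lra. apply Rlt_le, exp_pos. }
unfold F in HF. rewrite Ropp_0, exp_0 in HF.
replace (- (0 ^ 2) / 2) with 0 in HF by (simpl; field). rewrite exp_0 in HF.
assert (E : exp (- (y ^ 2) / 2) * exp (y ^ 2 / 2) = 1).
{ rewrite <- exp_plus. replace (- (y ^ 2) / 2 + y ^ 2 / 2) with 0 by field. apply exp_0. }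
pose proof (exp_pos (y ^ 2 / 2)).
assert (HR : (exp y + exp (- y)) * exp (- (y ^ 2) / 2) <= 2) by lra.
apply Rmult_le_compat_r with (r := exp (y ^ 2 / 2)) in HR; [|lra].
rewrite Rmult_assoc, E, Rmult_1_r in HR. auto.
Qed.

Lemma cosh_bound z : exp (- z) + exp z <= 2 * exp (z ^ 2 / 2).
Proof.
destruct (Rle_or_lt 0 z).
- rewrite Rplus_comm. apply cosh_bound_pos; auto.
- pose proof (cosh_bound_pos (- z) ltac:(lra)). rewrite Ropp_involutive in H0.
  replace ((- z) ^ 2) with (z ^ 2) in H0 by ring. auto.
Qed.

Definition kf (z : R) := 1 / (exp (- z) + exp z) ^ 2.
Definition th (z : R) := (exp z - exp (- z)) / (exp z + exp (- z)).

Lemma cosh_pos z : 0 < exp (- z) + exp z.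
Proof. pose proof (exp_pos z). pose proof (exp_pos (- z)). lra. Qed.

Lemma kf_pos z : 0 < kf z.
Proof. unfold kf. apply Rdiv_lt_0_compat; [lra|]. apply pow_lt, cosh_pos. Qed.

Lemma cosh_ge2 z : 2 <= exp (- z) + exp z.
Proof.
rewrite exp_Ropp. pose proof (exp_pos z). set (E := exp z) in *.
assert (/ E + E - 2 = (E - 1) ^ 2 / E) by (field; lra).
assert (0 <= (E - 1) ^ 2 / E) by (apply Rmult_le_pos; [apply pow2_ge_0|apply Rlt_le, Rinv_0_lt_compat; lra]).
lra.
Qed.

Lemma kf_le z : kf z <= / 4.
Proof.
unfold kf. pose proof (cosh_ge2 z). unfold Rdiv. rewrite Rmult_1_l.
apply Rinv_le_contravar; [lra|]. simpl. nra.
Qed.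

Lemma kf_lower z : / 4 * exp (- (z ^ 2)) <= kf z.
Proof.
unfold kf. pose proof (cosh_bound z). pose proof (cosh_pos z).
pose proof (exp_pos (z ^ 2 / 2)).
assert (E : exp (- (z ^ 2)) = / (exp (z ^ 2 / 2) * exp (z ^ 2 / 2))).
{ rewrite <- exp_plus, <- exp_Ropp. f_equal. field. }
rewrite E. unfold Rdiv. rewrite Rmult_1_l, <- Rinv_mult.
apply Rinv_le_contravar. simpl; apply Rmult_lt_0_compat; lra. unfold Rdiv in *. set (a := exp (- z) + exp z) in *. set (b := exp (z ^ 2 * / 2)) in *. simpl. nra.
Qed.

Lemma coshg_mono a b : 0 <= a <= b -> exp (- a) + exp a <= exp (- b) + exp b.
Proof.
intros Hab. rewrite !exp_Ropp.
assert (HA : 1 <= exp a) by (rewrite <- exp_0; destruct (Req_dec a 0) as [->|]; [lra|apply Rlt_le, exp_increasing; lra]).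
assert (HB : exp a <= exp b) by (destruct (Req_dec a b) as [->|]; [lra|apply Rlt_le, exp_increasing; lra]).
set (A := exp a) in *. set (B := exp b) in *.
assert (E : / B + B - (/ A + A) = (B - A) * (1 - / (A * B))) by (field; lra).
assert (0 <= 1 - / (A * B)).
{ assert (1 <= A * B) by nra. assert (/ (A * B) <= 1).
  { rewrite <- Rinv_1. apply Rinv_le_contravar; lra. } lra. }
assert (0 <= (B - A) * (1 - / (A * B))) by (apply Rmult_le_pos; lra). lra.
Qed.

Lemma coshg_abs a : exp (- a) + exp a = exp (- Rabs a) + exp (Rabs a).
Proof.
destruct (Rle_or_lt 0 a).
- rewrite Rabs_right; lra.
- rewrite Rabs_left; auto. rewrite Ropp_involutive. ring.
Qed.

Lemma kf_mono a b : Rabs a <= Rabs b -> kf b <= kf a.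
Proof.
intros H. unfold kf. rewrite (coshg_abs a), (coshg_abs b).
pose proof (coshg_mono (Rabs a) (Rabs b) ltac:(split; [apply Rabs_pos|auto])).
pose proof (cosh_pos (Rabs a)).
unfold Rdiv. rewrite !Rmult_1_l. apply Rinv_le_contravar. apply pow_lt; lra.
simpl. nra.
Qed.

Lemma th_deriv z : is_derive th z (4 * kf z).
Proof.
unfold th, kf. auto_derive.
- pose proof (exp_pos z); pose proof (exp_pos (- z)); lra.
- pose proof (exp_pos z); pose proof (exp_pos (- z)). rewrite exp_Ropp in *. field. split; nra.
Qed.

Lemma th_0 : th 0 = 0.
Proof. unfold th. rewrite Ropp_0, exp_0. field. Qed.

Lemma th_bound z : Rabs (th z) <= 1.
Proof.
unfold th. pose proof (exp_pos z); pose proof (exp_pos (- z)).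
unfold Rdiv. rewrite Rabs_mult, Rabs_inv, (Rabs_right (exp z + exp (- z))) by lra.
apply Rmult_le_reg_r with (exp z + exp (- z)); [lra|].
rewrite Rmult_assoc, Rinv_l by lra. rewrite Rmult_1_r, Rmult_1_l.
apply Rabs_le. lra.
Qed.

Lemma kf_cont z : continuous kf z.
Proof. apply (ex_derive_continuous (K:=R_AbsRing) (V:=R_NormedModule)). unfold kf. auto_derive.
pose proof (cosh_pos z). rewrite Rmult_1_r. apply Rgt_not_eq, Rmult_lt_0_compat; lra. Qed.

Definition psi (c y : R) : R :=
  match Req_dec_T (c * y) 0 with left _ => / 4 | right _ => th (c * y) / (4 * (c * y)) end.

Lemma is_RInt_eq_l (f : R -> R) a b l l' : is_RInt (V:=R_NormedModule) f a b l -> l = l' ->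
  is_RInt (V:=R_NormedModule) f a b l'.
Proof. intros H <-; auto. Qed.

Lemma psi_int c y : is_RInt (V:=R_NormedModule) (fun u => kf (u * (c * y))) 0 1 (psi c y).
Proof.
unfold psi. destruct (Req_dec_T (c * y) 0) as [H0|H0].
- rewrite H0. eapply is_RInt_eq_l.
  + eapply is_RInt_ext; [|apply (is_RInt_const (V:=R_NormedModule) 0 1 (/ 4))].
    intros u _. rewrite Rmult_0_r. unfold kf. rewrite Ropp_0, exp_0. assert (K : / 4 = 1 / (1 + 1) ^ 2 :> R) by field. exact K.
  + unfold scal; simpl; unfold mult; simpl. field.
- set (m := c * y) in *.
  eapply is_RInt_eq_l.
  + apply (FTC (fun u => / (4 * m) * th (u * m))).
    * intros u. evar (d : R). replace (kf (u * m)) with d.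
      -- apply (is_derive_scal (fun u => th (u * m))).
         apply (is_derive_comp th (fun u => u * m)). apply th_deriv.
         auto_derive; auto.
      -- unfold d. unfold scal, one, mult; simpl. unfold mult; simpl. field. auto.
    * intros u. apply (continuous_comp (fun u => u * m) kf). 
      apply (continuous_mult (K:=R_AbsRing)). apply continuous_id. apply continuous_const.
      apply kf_cont.
  + rewrite Rmult_1_l, Rmult_0_l, th_0. match goal with |- ?a = ?b => change (@eq R a b) end. field. auto.
Qed.

Lemma RInt_const_R (k a b : R) : RInt (V:=R_CompleteNormedModule) (fun _ => k) a b = (b - a) * k.
Proof. rewrite RInt_const. reflexivity. Qed.

Lemma psi_bounds c y : kf (c * y) <= psi c y <= / 4.
Proof.
assert (E : psi c y = RInt (V:=R_CompleteNormedModule) (fun u => kf (u * (c * y))) 0 1).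
{ symmetry. apply is_RInt_unique. apply psi_int. }
assert (Ex : ex_RInt (V:=R_CompleteNormedModule) (fun u => kf (u * (c * y))) 0 1).
{ eexists. apply psi_int. }
rewrite E. split.
- eapply Rle_trans; [|apply (RInt_le (fun _ => kf (c * y))); auto].
  + rewrite RInt_const_R. lra.
  + lra.
  + apply ex_RInt_const.
  + intros u Hu. apply kf_mono. rewrite Rabs_mult. rewrite (Rabs_right u) by lra.
    pose proof (Rabs_pos (c * y)). nra.
- eapply Rle_trans; [apply (RInt_le _ (fun _ => / 4)); auto|].
  + lra.
  + apply ex_RInt_const.
  + intros u Hu. apply kf_le.
  + rewrite RInt_const_R. lra.
Qed.

Lemma psi_mul c y : c <> 0 -> y * psi c y = th (c * y) / (4 * c).
Proof.
intros Hc. unfold psi. destruct (Req_dec_T (c * y) 0) as [H0|H0].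
- assert (y = 0) by (destruct (Rmult_integral _ _ H0); [contradiction|auto]).
  subst y. rewrite Rmult_0_r, th_0. field. auto.
- field. split; auto. intros ->. apply H0; ring.
Qed.

Lemma psi_zero y : psi 0 y = / 4.
Proof. unfold psi. destruct (Req_dec_T (0 * y) 0) as [|H]; auto. exfalso; apply H; ring. Qed.

Lemma psi_cont c y : continuous (psi c) y.
Proof.
destruct (Req_dec c 0) as [Hc|Hc].
- subst c. apply (continuous_ext (fun _ => / 4)). intros; symmetry; apply psi_zero.
  apply continuous_const.
- destruct (Req_dec y 0) as [Hy|Hy].
  + subst y. apply continuity_pt_filterlim.
    intros eps Heps.
    assert (Hd : derivable_pt_lim th 0 1).
    { apply is_derive_Reals. replace 1 with (4 * kf 0). apply th_deriv.
      unfold kf. rewrite Ropp_0, exp_0. field. }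
    destruct (Hd (4 * eps) ltac:(lra)) as [del Hdel].
    exists (del / Rabs c). split.
    { apply Rdiv_lt_0_compat. apply cond_pos. apply Rabs_pos_lt; auto. }
    intros z [[_ Hz0] Hzd]. simpl in Hzd. unfold R_dist in *. simpl. unfold R_dist.
    rewrite Rminus_0_r in Hzd.
    assert (Hz : z <> 0) by auto.
    assert (Hcz : c * z <> 0) by (intros H; destruct (Rmult_integral _ _ H); contradiction).
    assert (P0 : psi c 0 = / 4) by (unfold psi; destruct (Req_dec_T (c * 0) 0) as [|H]; auto; exfalso; apply H; ring).
    rewrite P0. unfold psi. destruct (Req_dec_T (c * z) 0) as [H|_]; [contradiction|].
    specialize (Hdel (c * z) Hcz).
    assert (Habs : Rabs (c * z) < del).
    { rewrite Rabs_mult. apply Rmult_lt_reg_r with (/ Rabs c).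
      apply Rinv_0_lt_compat, Rabs_pos_lt; auto.
      replace (Rabs c * Rabs z * / Rabs c) with (Rabs z) by (field; apply Rabs_no_R0; auto).
      auto. }
    specialize (Hdel Habs). rewrite Rplus_0_l, th_0, Rminus_0_r in Hdel.
    replace (th (c * z) / (4 * (c * z)) - / 4) with ((th (c * z) / (c * z) - 1) / 4) by (field; auto).
    unfold Rdiv at 1. rewrite Rabs_mult, Rabs_inv, (Rabs_right 4) by lra. lra.
  + apply (continuous_ext_loc _ (fun z => th (c * z) / (4 * (c * z)))).
    * exists (mkposreal (Rabs y) (Rabs_pos_lt _ Hy)). intros z Hz.
      unfold psi. destruct (Req_dec_T (c * z) 0) as [H|]; auto. exfalso.
      destruct (Rmult_integral _ _ H); [contradiction|]. subst z.
      unfold ball in Hz; simpl in Hz; unfold AbsRing_ball, abs, minus, plus, opp in Hz; simpl in Hz.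
      rewrite Rplus_0_l, Rabs_Ropp in Hz. lra.
    * apply (ex_derive_continuous (K:=R_AbsRing) (V:=R_NormedModule)). unfold th. auto_derive.
      pose proof (exp_pos (c * y)); pose proof (exp_pos (- (c * y))).
      assert (c * y <> 0) by (intros Hq; destruct (Rmult_integral _ _ Hq); contradiction).
      split; [lra|split; auto].
Qed.


Lemma quarter_phi : improper_int (fun x => / 4 * gauss_density x) (/ 4).
Proof. eapply improper_eq_l. apply improper_scal, gauss_norm. ring. Qed.

Lemma final_assembly (d : nat) (sigma : R) (theta : nat -> R) (L1 L2 : R) :
  (1 <= d)%nat ->
  Fentry d sigma theta 0 0 L1 -> (forall j, (1 <= j < d)%nat -> Fentry d sigma theta j j L2) ->
  L2 >= L1 -> L1 >= 1 / (4 * (1 + 2 * sqnorm d theta / sigma ^ 2)) ->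
  forall j : nat, (j < d)%nat ->
    exists Fjj F11 : R,
      Fentry d sigma theta j j Fjj /\
      Fentry d sigma theta 0%nat 0%nat F11 /\
      Fjj >= F11 /\
      F11 >= 1 / (4 * (1 + 2 * sqnorm d theta / sigma ^ 2)).
Proof.
intros Hd H1 H2 H21 Hb j Hj. destruct j as [|j].
- exists L1, L1. repeat split; auto. lra.
- exists L2, L1. repeat split; auto. apply H2. lia.
Qed.

Theorem lemma3_proof (d : nat) (sigma : R) (theta : nat -> R)
  (hd : (1 <= d)%nat) (hsigma : 0 < sigma) :
  forall j : nat, (j < d)%nat ->
    exists Fjj F11 : R,
      Fentry d sigma theta j j Fjj /\
      Fentry d sigma theta 0%nat 0%nat F11 /\
      Fjj >= F11 /\
      F11 >= 1 / (4 * (1 + 2 * sqnorm d theta / sigma ^ 2)).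
Proof.
set (s := sqnorm d theta). pose proof (sqnorm_ge0 d theta) as Hs. fold s in Hs.
set (c := sqrt s / sigma).
assert (Hpsi : forall y, is_RInt (V:=R_NormedModule) (fun u => 1 / (exp (- (u * sqrt (sqnorm d theta) * y / sigma))
       + exp (u * sqrt (sqnorm d theta) * y / sigma)) ^ 2) 0 1 (psi c y)).
{ intros y. eapply is_RInt_ext; [|apply psi_int].
  intros u _. unfold kf. fold s. replace (u * (c * y)) with (u * sqrt s * y / sigma).
  reflexivity. unfold c. field. lra. }
assert (Hc2 : c ^ 2 = s / sigma ^ 2).
{ unfold c. unfold Rdiv. rewrite Rpow_mult_distr. simpl. rewrite Rmult_1_r, sqrt_sqrt; auto.
  field. lra. }
assert (Hpc : forall x, continuous (fun x => psi c x * gauss_density x) x).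
{ intros x. apply (continuous_mult (K:=R_AbsRing)). apply psi_cont. apply phi_cont. }
destruct (improper_exists (fun x => psi c x * gauss_density x) (fun x => / 4 * gauss_density x) (/ 4)) as [L2 HL2]; auto.
{ intros x. pose proof (psi_bounds c x). pose proof (kf_pos (c * x)). pose proof (phi_pos x). split; nra. }
{ apply quarter_phi. }
destruct (Req_dec c 0) as [Hc0|Hc0].
-
  assert (Hs0 : s = 0).
  { rewrite Hc0 in Hc2. assert (Hq : s = (s / sigma ^ 2) * sigma ^ 2) by (field; lra).
    rewrite <- Hc2 in Hq. simpl in Hq. lra. }
  assert (HL1 : improper_int (fun x => x * x * psi c x * gauss_density x) (/ 4)).
  { eapply improper_ext. eapply improper_eq_l.
    apply (improper_scal (fun x => x * x * gauss_density x) (/ 4)), gauss_m2. ring.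
    intros x. rewrite Hc0, psi_zero. ring. }
  assert (HL2' : L2 = / 4).
  { apply Rle_antisym.
    - apply (improper_le _ _ _ _ HL2 quarter_phi). intros x. rewrite Hc0, psi_zero. lra.
    - apply (improper_le _ _ _ _ quarter_phi HL2). intros x. rewrite Hc0, psi_zero. lra. }
  destruct (top_reduction d sigma theta (psi c) (/ 4) L2 hd Hpsi HL1 HL2) as [F1 F2].
  apply (final_assembly d sigma theta (/ 4) L2); auto.
  + lra.
  + fold s. rewrite Hs0. unfold Rdiv. rewrite Rmult_0_r, Rmult_0_l, Rplus_0_r, Rmult_1_r, Rmult_1_l. lra.
-
  assert (Hkc : forall x, continuous (fun x => kf (c * x) * gauss_density x) x).
  { intros x. apply (continuous_mult (K:=R_AbsRing)).
    apply (continuous_comp (fun x => c * x) kf). apply (continuous_mult (K:=R_AbsRing)).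
    apply continuous_const. apply continuous_id. apply kf_cont. apply phi_cont. }
  destruct (improper_exists (fun x => kf (c * x) * gauss_density x) (fun x => / 4 * gauss_density x) (/ 4)) as [L1 HL1g]; auto.
  { intros x. pose proof (kf_le (c * x)). pose proof (kf_pos (c * x)). pose proof (phi_pos x). split; nra. }
  { apply quarter_phi. }
  assert (HL1 : improper_int (fun x => x * x * psi c x * gauss_density x) L1).
  { apply (improper_ibp _ (fun x => kf (c * x) * gauss_density x)
             (fun x => (- / (4 * c) * th (c * x)) * gauss_density x)); auto.
    - intros x. apply (continuous_mult (K:=R_AbsRing)); [|apply phi_cont].
      apply (continuous_mult (K:=R_AbsRing)); [|apply psi_cont].
      apply (continuous_mult (K:=R_AbsRing)); apply continuous_id.
    - intros x. evar (dd : R).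
      replace (x * x * psi c x * gauss_density x - kf (c * x) * gauss_density x) with dd.
      + apply (is_derive_mult (fun x => - / (4 * c) * th (c * x)) gauss_density).
        * apply (is_derive_scal (fun x => th (c * x))).
          apply (is_derive_comp th (fun x => c * x)). apply th_deriv.
          auto_derive; auto.
        * apply phi_deriv.
        * intros; apply Rmult_comm.
      + unfold dd. replace (x * x * psi c x) with (x * (x * psi c x)) by ring.
        rewrite psi_mul by auto. unfold plus, mult, scal, one; simpl. unfold mult; simpl.
        field. auto.
    - apply (lim_decay _ (/ (2 * Rabs c))).
      { apply Rlt_le, Rinv_0_lt_compat. pose proof (Rabs_pos_lt _ Hc0). lra. }
      intros x Hx. pose proof (phi_decay x Hx) as [Hp _]. pose proof (phi_pos x).
      pose proof (th_bound (c * x)). pose proof (Rabs_pos_lt _ Hc0).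
      rewrite !Rabs_mult, Rabs_Ropp, Rabs_inv, Rabs_mult, (Rabs_right 4) by lra.
      rewrite (Rabs_right (gauss_density x)) by lra.
      apply Rle_trans with (/ (4 * Rabs c) * 1 * (2 / Rabs x)).
      { apply Rmult_le_compat. 
        - apply Rmult_le_pos. apply Rlt_le, Rinv_0_lt_compat; lra. apply Rabs_pos.
        - lra.
        - apply Rmult_le_compat_l; auto. apply Rlt_le, Rinv_0_lt_compat; lra.
        - auto. }
      right. field. split; lra.
    - apply (lim_decay _ (/ (2 * Rabs c))).
      { apply Rlt_le, Rinv_0_lt_compat. pose proof (Rabs_pos_lt _ Hc0). lra. }
      intros x Hx. pose proof (phi_decay x Hx) as [Hp _]. pose proof (phi_pos x).
      pose proof (th_bound (c * x)). pose proof (Rabs_pos_lt _ Hc0).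
      rewrite !Rabs_mult, Rabs_Ropp, Rabs_inv, Rabs_mult, (Rabs_right 4) by lra.
      rewrite (Rabs_right (gauss_density x)) by lra.
      apply Rle_trans with (/ (4 * Rabs c) * 1 * (2 / Rabs x)).
      { apply Rmult_le_compat. 
        - apply Rmult_le_pos. apply Rlt_le, Rinv_0_lt_compat; lra. apply Rabs_pos.
        - lra.
        - apply Rmult_le_compat_l; auto. apply Rlt_le, Rinv_0_lt_compat; lra.
        - auto. }
      right. field. split; lra. }
  destruct (top_reduction d sigma theta (psi c) L1 L2 hd Hpsi HL1 HL2) as [F1 F2].
  apply (final_assembly d sigma theta L1 L2); auto.
  + apply Rle_ge. apply (improper_le _ _ _ _ HL1g HL2). intros x.
    pose proof (psi_bounds c x). pose proof (phi_pos x). nra.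
  + apply Rle_ge.
    assert (HB : / 4 * / sqrt (1 + 2 * c ^ 2) <= L1).
    { apply (improper_le (fun x => / 4 * (exp (- ((c * x) ^ 2)) * gauss_density x)) _ _ _
               (improper_scal _ (/ 4) _ (gauss_expsq c)) HL1g).
      intros x. pose proof (kf_lower (c * x)). pose proof (phi_pos x). nra. }
    fold s. replace (2 * s / sigma ^ 2) with (2 * c ^ 2) by (rewrite Hc2; field; lra).
    pose proof (pow2_ge_0 c).
    assert (Hsq : sqrt (1 + 2 * c ^ 2) <= 1 + 2 * c ^ 2).
    { assert (1 <= sqrt (1 + 2 * c ^ 2)) by (pose proof (sqrt_le_1_alt 1 (1 + 2 * c ^ 2) ltac:(lra)) as Hq; rewrite sqrt_1 in Hq; exact Hq).
      pose proof (sqrt_sqrt (1 + 2 * c ^ 2) ltac:(lra)). nra. }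
    assert (0 < sqrt (1 + 2 * c ^ 2)) by (apply sqrt_lt_R0; lra).
    eapply Rle_trans; [|apply HB].
    unfold Rdiv. rewrite Rmult_1_l, Rinv_mult.
    apply Rmult_le_compat_l; [lra|]. apply Rinv_le_contravar; lra.
Qed.

Theorem lemma3 (d : nat) (sigma : R) (theta : nat -> R)
  (hd : (1 <= d)%nat) (hsigma : 0 < sigma)
  (htheta : sqnorm d theta <= 5 * sigma ^ 2 / 8) :
  forall j : nat, (j < d)%nat ->
    exists Fjj F11 : R,
      Fentry d sigma theta j j Fjj /\
      Fentry d sigma theta 0%nat 0%nat F11 /\
      Fjj >= F11 /\
      F11 >= 1 / (4 * (1 + 2 * sqnorm d theta / sigma ^ 2)).
Proof.
intros. apply lemma3_proof; auto.
Qed.
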